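(* Let $G$ be a graph of order $n$ with minimum degree $\delta(G)\geq\frac{n-1}{2}$. Then $prc(G)=\chi'(G)$.
   Context: A path in an edge-coloured graph is a rainbow path if its edges receive pairwise distinct colours. The proper rainbow connection number $prc(G)$ of a connected graph is the minimum number of colours in a proper edge-colouring (adjacent edges get distinct colours) such that every two distinct vertices are joined by a rainbow path. $\chi'(G)$ is the chromatic index. *)

(* Defs.v *)
From mathcomp Require Import all_boot.
Set Implicit Arguments. Unset Strict Implicit. Unset Printing Implicit Defensive.

Definition simple_graph (T : finType) (e : rel T) : Prop :=
  irreflexive e /\ symmetric e.

Definition deg (T : finType) (e : rel T) (v : T) : nat := #|[set u | e v u]|.

(* An edge colouring is a function [c : T -> T -> nat]; only its values on
   edges matter, and it must be symmetric on edges (c x y is the colour of the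
   edge xy). *)
Definition edge_colouring (T : finType) (e : rel T) (k : nat) (c : T -> T -> nat)
  : Prop :=
  forall x y, e x y -> c x y = c y x /\ c x y < k.

Definition proper_colouring (T : finType) (e : rel T) (k : nat) (c : T -> T -> nat)
  : Prop :=
  edge_colouring e k c /\
  forall x y z, e x y -> e x z -> y != z -> c x y != c x z.

Definition rainbow_path (T : finType) (e : rel T) (c : T -> T -> nat)
  (x y : T) (p : seq T) : Prop :=
  path e x p /\ uniq (x :: p) /\ last x p = y /\ uniq (pairmap c x p).

Definition rainbow_connected (T : finType) (e : rel T) (c : T -> T -> nat) : Prop :=
  forall x y, x != y -> exists p, rainbow_path e c x y p.

Definition is_chromatic_index (T : finType) (e : rel T) (k : nat) : Prop :=
  (exists c, proper_colouring e k c) /\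
  forall k' c, proper_colouring e k' c -> k <= k'.

Definition is_prc (T : finType) (e : rel T) (k : nat) : Prop :=
  (exists c, proper_colouring e k c /\ rainbow_connected e c) /\
  forall k' c, proper_colouring e k' c -> rainbow_connected e c -> k <= k'.

(* Main.v *)
Require Import Defs.
From mathcomp Require Import all_boot.
From mathcomp Require Import zify.

Lemma common_nb (T : finType) (e : rel T) :
  simple_graph e ->
  (forall v : T, #|T| <= 2 * deg e v + 1) ->
  forall x y, x != y -> ~~ e x y -> exists w, e x w && e w y.
Proof.
move=> [irr sym] hdeg x y nxy nexy.
set A := [set u | e x u]; set B := [set u | e y u].
have hx := hdeg x; have hy := hdeg y.
rewrite /deg -/A -/B in hx hy.
case: (set_0Vmem (A :&: B)) => [H0|[w]].
  have hU := cardsU A B. rewrite H0 cards0 subn0 in hU.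
  have sub : A :|: B \subset ~: [set x; y].
    apply/subsetP=> u; rewrite !inE => /orP[] H; apply/negP=> /orP[] /eqP E; subst u.
    - by rewrite irr in H.
    - by rewrite H in nexy.
    - by rewrite sym H in nexy.
    - by rewrite irr in H.
  have := subset_leq_card sub.
  have hC := cardsC [set x; y].
  rewrite cards2 nxy hU in hC * => hle.
  lia.
rewrite !inE => /andP[h1 h2]; exists w; by rewrite h1 sym h2.
Qed.

Theorem proposition5p8 (T : finType) (e : rel T) :
  simple_graph e ->
  (forall v : T, #|T| <= 2 * deg e v + 1) ->
  forall k : nat, is_chromatic_index e k -> is_prc e k.
Proof.
move=> hs hdeg k [[c hc] hmin].
have rc : forall c, proper_colouring e k c -> rainbow_connected e c.
  move=> c' [hec hpr] x y nxy.
  have [irr sym] := hs.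
  case exy: (e x y).
    exists [:: y]; rewrite /rainbow_path /= exy inE nxy; done.
  have [w /andP[hxw hwy]] := @common_nb _ _ hs hdeg _ _ nxy (negbT exy).
  exists [:: w; y]; rewrite /rainbow_path /= hxw hwy !inE.
  have nxw : x != w by apply/eqP=> E; subst w; rewrite irr in hxw.
  have nwy : w != y by apply/eqP=> E; subst w; rewrite irr in hwy.
  rewrite negb_or nxw nxy nwy /= andbT; split=> //; split=> //.
  have [-> _] := hec x w hxw.
  by rewrite (hpr w x y) // sym.
split; first by exists c; split=> //; exact: rc.
by move=> k' c' hp _; exact: hmin hp.
Qed.
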